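(* Let $G$ be a group and let $(\Gamma,\psi)$ be a $G$-gain graph on $n$ vertices. Let $\alpha=\{C_0,C_1,\dots,C_{2k}\}$ be a $G$-WQH partition of the vertex set of $\Gamma$, let $(\Gamma^\alpha,\psi^\alpha)$ be the gain graph obtained from $(\Gamma,\psi)$ and $\alpha$ as described in the context, and let $Q_\alpha$ be the matrix associated with $\alpha$. Then, with vertices ordered as $C_0,C_1,C_2,\dots,C_{2k}$, $$A_{(\Gamma^\alpha,\psi^\alpha)}=Q_\alpha A_{(\Gamma,\psi)}Q_\alpha.$$ In particular, $(\Gamma,\psi)$ and $(\Gamma^\alpha,\psi^\alpha)$ are $G$-cospectral.
   Context: A $G$-gain graph $(\Gamma,\psi)$ consists of a directed graph $\Gamma=(V,A)$ in which every arc $(u,w)$ has its reverse $(w,u)$ (no loops), and a gain function $\psi:A\to G$ with $\psi(w,u)=\psi(u,w)^{-1}$. Set $\psi(v,w)=0\in\mathbb{C}G$ when $v,w$ are not adjacent. For $V=\{v_1,\dots,v_n\}$, the adjacency matrix $A_{(\Gamma,\psi)}\in M_n(\mathbb{C}G)$ has $(i,j)$ entry $\psi(v_i,v_j)$ if $v_i\sim v_j$ and $0$ otherwise; here $\mathbb{C}G$ is the complex group algebra with neutral element $1_G$. Given a partition $\alpha=\{C_0,C_1,\dots,C_{2k}\}$ of $V$, for a vertex $v$ let $\Psi_i(v)=\sum_{w\in C_i,\,w\sim v}\psi(v,w)\in\mathbb{C}G$. The partition is a $G$-WQH partition if: (1) $|C_i|=|C_{i+1}|$ for every odd $i<2k$;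 (2) for $i,j\in\{1,\dots,2k\}$ and $v,v'\in C_i$, $\Psi_j(v)=\Psi_j(v')$; (3) for odd $i,j<2k$ and $v\in C_i$, $v'\in C_{i+1}$, $\Psi_j(v)=\Psi_{j+1}(v')$ and $\Psi_{j+1}(v)=\Psi_j(v')$; (4) for every $v\in C_0$ and every odd $i<2k$, either (a) $\Psi_i(v)=\Psi_{i+1}(v)$, or (b) $\Psi_i(v)=|C_i|g_1$ and $\Psi_{i+1}(v)=|C_{i+1}|g_2$ for some distinct $g_1,g_2\in G\cup\{0\}\subset\mathbb{C}G$ (i.e. $v$ is joined to all of $C_i$ with gain $g_1$, or to none if $g_1=0$, and likewise to $C_{i+1}$ with $g_2$). The gain graph $(\Gamma^\alpha,\psi^\alpha)$ on the same vertex set is defined by (with $\psi^\alpha(v,w)=0$ meaning non-adjacency): $\psi^\alpha(v,w)=\psi(v,w)$ for $v,w\in C_1\cup\dots\cup C_{2k}$; $\psi^\alpha(v,w)=\psi(v,w)$ for $v,w\in C_0$; for $v\in C_0$ and odd $i<2k$ with $\Psi_i(v)=\Psi_{i+1}(v)$, $\psi^\alpha(v,w)=\psi(v,w)$ for $w\in C_i\cup C_{i+1}$; for $v\in C_0$ and odd $i<2k$ in case (b) with $g_1,g_2$, $\psi^\alpha(v,w)=g_2$ for $w\in C_i$ and $\psi^\alpha(v,w)=g_1$ for $w\in C_{i+1}$ (gains of reversed arcs are the inverses). For $m\ge1$ let $Q_m=\begin{pmatrix} I_m-\frac1m J_m & \frac1m J_m\\ \frac1m J_m & I_m-\frac1m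 J_m\end{pmatrix}\in M_{2m}(\mathbb{C}G)$, where $I_m$ is the identity (diagonal entries $1_G$) and $J_m$ the all-$1_G$ matrix. With $m_t=|C_{2t-1}|=|C_{2t}|$ for $t=1,\dots,k$, define the block-diagonal matrix $Q_\alpha=\mathrm{diag}(I_{|C_0|},Q_{m_1},\dots,Q_{m_k})\in M_n(\mathbb{C}G)$. For $a=\sum_x a_x x\in\mathbb{C}G$, let $\mu(a)$ be the class function on $G$ given by $\mu(a)(g)=\sum_{x\in[g]}a_x$, where $[g]$ is the conjugacy class of $g$. Two matrices $A,B\in M_n(\mathbb{C}G)$ are $G$-cospectral if $\mu(\mathrm{Tr}(A^h))=\mu(\mathrm{Tr}(B^h))$ for every positive integer $h$, where $\mathrm{Tr}$ is the sum of diagonal entries in $\mathbb{C}G$; two $G$-gain graphs are $G$-cospectral if their adjacency matrices are. *)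

(* Defs.v *)
From HB Require Import structures.
From mathcomp Require Import all_boot all_order all_algebra.
From mathcomp Require Import finmap.
From mathcomp Require Import xfinmap monalg.
From mathcomp Require Import complex Rstruct boolp.

Set Implicit Arguments.
Unset Strict Implicit.
Unset Printing Implicit Defensive.

Import GRing.Theory.
Local Open Scope fset_scope.
Local Open Scope ring_scope.

Definition Cplx : numClosedFieldType := (Rdefinitions.R)[i].

Section GroupAlgebra.
Variable G : groupType.

Definition grpalg : Type := {malg Cplx[G]}.
HB.instance Definition _ := GRing.Zmodule.on grpalg.

Implicit Types (a b g : grpalg) (c : Cplx).

Definition gaone : grpalg := << (1 : Cplx) *g (1%g : G) >>.

Definition gamul a b : grpalg :=
  \sum_(x <- msupp a) \sum_(y <- msupp b) << a@_x * b@_y *g (x * y)%g >>.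

Lemma gamullw (d1 d2 : {fset G}) a b :
  msupp a `<=` d1 -> msupp b `<=` d2 ->
  gamul a b = \sum_(x <- d1) \sum_(y <- d2) << a@_x * b@_y *g (x * y)%g >>.
Proof.
move=> le_d1 le_d2; rewrite /gamul (big_fset_incl _ le_d1) /=.
  apply/eq_bigr=> k1 _; apply/big_fset_incl => // k _ /mcoeff_outdom ->.
  by rewrite mulr0 monalgU0.
move=> k _ /mcoeff_outdom ak.
by rewrite big1 => // k' _; rewrite ak mul0r monalgU0.
Qed.

Lemma gamulrw (d1 d2 : {fset G}) a b : msupp a `<=` d1 -> msupp b `<=` d2 ->
  gamul a b = \sum_(y <- d2) \sum_(x <- d1) << a@_x * b@_y *g (x * y)%g >>.
Proof. by move=> l1 l2; rewrite (gamullw l1 l2) exchange_big. Qed.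

Lemma gamul0g : left_zero 0 gamul.
Proof. by move=> g; rewrite /gamul msupp0 big_seq_fset0. Qed.

Lemma gamulg0 : right_zero 0 gamul.
Proof.
by move=> g; rewrite /gamul exchange_big /= msupp0 big_seq_fset0.
Qed.

Lemma gamulUg c0 k g :
  gamul << c0 *g k >> g = \sum_(k' <- msupp g) << c0 * g@_k' *g (k * k')%g >>.
Proof.
rewrite (gamullw msuppU_le (fsubset_refl _)) big_seq_fset1.
by apply/eq_bigr => k' _; rewrite mcoeffUU.
Qed.

Lemma gamulgU c0 k g :
  gamul g << c0 *g k >> = \sum_(k' <- msupp g) << g@_k' * c0 *g (k' * k)%g >>.
Proof.
rewrite (gamulrw (fsubset_refl _) msuppU_le) big_seq_fset1.
by apply/eq_bigr=> k' _; rewrite mcoeffUU.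
Qed.

Lemma gamulUU c1 c2 k1 k2 :
  gamul << c1 *g k1 >> << c2 *g k2 >> = << c1 * c2 *g (k1 * k2)%g >>.
Proof. by rewrite (gamulrw msuppU_le msuppU_le) !big_seq_fset1 !mcoeffUU. Qed.

Lemma gamulEl1 a b :
  gamul a b = \sum_(k1 <- msupp a) gamul << a@_k1 *g k1 >> b.
Proof. by apply/eq_bigr=> k _; rewrite gamulUg. Qed.

Lemma gamulEr1 a b :
  gamul a b = \sum_(k2 <- msupp b) gamul a << b@_k2 *g k2 >>.
Proof.
rewrite {1}/gamul exchange_big /=; apply/eq_bigr=> k _.
by rewrite gamulgU.
Qed.

Lemma gamul1g : left_id gaone gamul.
Proof.
move=> g; rewrite /gaone gamulUg [RHS]monalgE.
by apply/eq_bigr=> kg _; rewrite mul1r mul1g.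
Qed.

Lemma gamulg1 : right_id gaone gamul.
Proof.
move=> g; rewrite /gaone gamulgU [RHS]monalgE.
by apply/eq_bigr=> k _; rewrite mulr1 mulg1.
Qed.

Lemma gamulgDl : left_distributive gamul +%R.
Proof.
move=> g1 g2 g; rewrite [in RHS](gamullw (fsubsetUl _ (msupp g2)) (fsubset_refl _)).
rewrite [in RHS](gamullw (fsubsetUr (msupp g1) _) (fsubset_refl _)).
rewrite (gamullw (msuppD_le _ _) (fsubset_refl _)).
rewrite -big_split /=; apply/eq_bigr=> k1 _.
rewrite -big_split /=; apply/eq_bigr=> k2 _.
by rewrite mcoeffD mulrDl monalgUD.
Qed.

Lemma gamulgDr : right_distributive gamul +%R.
Proof.
move=> g g1 g2; rewrite [in RHS](gamulrw (fsubset_refl _) (fsubsetUl _ (msupp g2))).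
rewrite [in RHS](gamulrw (fsubset_refl _) (fsubsetUr (msupp g1) _)).
rewrite (gamulrw (fsubset_refl _) (msuppD_le _ _)).
rewrite -big_split /=; apply/eq_bigr => k1 _.
rewrite -big_split /=; apply/eq_bigr => k2 _.
by rewrite mcoeffD mulrDr monalgUD.
Qed.

Lemma gamulA : associative gamul.
Proof.
move=> g1 g2 g3.
rewrite [RHS](big_morph (gamul^~ _) (fun _ _ => gamulgDl _ _ _) (gamul0g _)).
rewrite gamulEl1; apply/eq_bigr=> k1 _.
rewrite [LHS](big_morph (gamul _) (fun _ _ => gamulgDr _ _ _) (gamulg0 _)).
rewrite [RHS](big_morph (gamul^~ _) (fun _ _ => gamulgDl _ _ _) (gamul0g _)).
apply/eq_bigr=> k2 _.
rewrite [LHS](big_morph (gamul _) (fun _ _ => gamulgDr _ _ _) (gamulg0 _)).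
by rewrite gamulEr1; apply/eq_bigr=> k3 _; rewrite !gamulUU mulrA mulgA.
Qed.

Lemma gaone_neq0 : gaone != 0.
Proof. by apply/eqP/malgP=> /(_ 1%g) /eqP; rewrite !mcoeffsE oner_eq0. Qed.

HB.instance Definition _ := GRing.Zmodule_isNzRing.Build grpalg
  gamulA gamul1g gamulg1 gamulgDl gamulgDr gaone_neq0.

Definition gaC (c : Cplx) : grpalg := << c *g (1%g : G) >>.

Definition gelt (o : option G) : grpalg :=
  if o is Some g then << (1 : Cplx) *g g >> else 0.

Definition mu (a : grpalg) : G -> Cplx :=
  fun z : G => \sum_(x <- msupp a | `[< exists h : G, x = (z ^ h)%g >]) a@_x.

End GroupAlgebra.

Definition G_cospectral (G : groupType) (n : nat) (A B : 'M[grpalg G]_n) : Prop :=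
  forall h : nat, (0 < h)%N -> mu (\tr (A ^+ h)) = mu (\tr (B ^+ h)).

(* G-gain graphs on the vertex set 'I_n.  psi v w = Some g means v ~ w with
   gain g; psi v w = None means v, w not adjacent (gain 0).                  *)
Section GainGraphs.
Variables (G : groupType) (n : nat).
Implicit Types (psi : 'I_n -> 'I_n -> option G).

Definition gain_graph psi : Prop :=
  (forall v, psi v v = None) /\
  (forall v w, psi w v = omap (fun g => (g^-1)%g) (psi v w)).

Definition adjmx psi : 'M[grpalg G]_n := \matrix_(i, j) gelt (psi i j).

(* A partition alpha = {C_0, ..., C_2k} is given by a class map cls :
   C_i = [set v | cls v == i] with cls v <= 2k. *)
Variables (k : nat) (cls : 'I_n -> nat).

Definition csize (i : nat) : nat := #|[set v | cls v == i]|.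

Definition Psi psi (i : nat) (v : 'I_n) : grpalg G :=
  \sum_(w : 'I_n | (cls w == i) && (psi v w != None)) gelt (psi v w).

Definition WQH psi : Prop :=
  (forall i, odd i -> (i < k.*2)%N -> csize i = csize i.+1) /\
  (forall i j v v', (1 <= i <= k.*2)%N -> (1 <= j <= k.*2)%N ->
     cls v = i -> cls v' = i -> Psi psi j v = Psi psi j v') /\
  (forall i j v v', odd i -> (i < k.*2)%N -> odd j -> (j < k.*2)%N ->
     cls v = i -> cls v' = i.+1 ->
     Psi psi j v = Psi psi j.+1 v' /\ Psi psi j.+1 v = Psi psi j v') /\
  (forall v i, cls v = 0%N -> odd i -> (i < k.*2)%N ->
     Psi psi i v = Psi psi i.+1 v \/
     exists g1 g2 : option G, g1 <> g2 /\
       Psi psi i v = gelt g1 *+ csize i /\ Psi psi i.+1 v = gelt g2 *+ csize i.+1).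

Definition alpha_gains psi psia : Prop :=
  (forall v w, psia w v = omap (fun g => (g^-1)%g) (psia v w)) /\
  (forall v w, cls v != 0%N -> cls w != 0%N -> psia v w = psi v w) /\
  (forall v w, cls v = 0%N -> cls w = 0%N -> psia v w = psi v w) /\
  (forall v i w, cls v = 0%N -> odd i -> (i < k.*2)%N ->
     Psi psi i v = Psi psi i.+1 v -> (cls w = i \/ cls w = i.+1) ->
     psia v w = psi v w) /\
  (forall v i (g1 g2 : option G), cls v = 0%N -> odd i -> (i < k.*2)%N ->
     g1 <> g2 -> Psi psi i v = gelt g1 *+ csize i ->
     Psi psi i.+1 v = gelt g2 *+ csize i.+1 ->
     (forall w, cls w = i -> psia v w = g2) /\
     (forall w, cls w = i.+1 -> psia v w = g1)).

(* The matrix Q_alpha = diag(I_{|C_0|}, Q_{m_1}, ..., Q_{m_k}), with the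
   vertices ordered as C_0, C_1, ..., C_2k; the block Q_{m_t} sits on the
   classes C_{2t-1}, C_{2t}. *)
Definition msize (t : nat) : nat := csize (t.*2.-1).

Definition Qalpha : 'M[grpalg G]_n :=
  \matrix_(v, w)
    if (cls v == 0%N) || (cls w == 0%N) then (v == w)%:R
    else if (cls v).+1./2 != (cls w).+1./2 then 0
    else if cls v == cls w then (v == w)%:R - gaC G ((msize (cls v).+1./2)%:R^-1)
    else gaC G ((msize (cls v).+1./2)%:R^-1).

End GainGraphs.

(* Main.v *)
Require Import Defs.
From HB Require Import structures.
From mathcomp Require Import all_boot all_order all_algebra.
From mathcomp Require Import finmap.
From mathcomp Require Import xfinmap monalg.
From mathcomp Require Import complex Rstruct boolp.
From mathcomp Require Import zify ring.

Set Implicit Arguments.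
Unset Strict Implicit.
Unset Printing Implicit Defensive.
Import GRing.Theory Num.Theory.
Local Open Scope ring_scope.

Section GA.
Variable G : groupType.
Local Notation A := (grpalg G).

Lemma gamulE (a b : A) : a * b = gamul a b. Proof. by []. Qed.

Lemma mcoeff_gaCl c (a : A) x : (gaC G c * a)@_x = c * a@_x.
Proof.
rewrite gamulE /gaC gamulUg.
have -> : \sum_(k' <- msupp a) << c * a@_k' *g (1 * k')%g >>
   = (c *: (a : {malg Cplx[G]})) by rewrite malgZ_def; apply: eq_bigr => y _; rewrite mul1g.
by rewrite mcoeffZ.
Qed.

Lemma mcoeff_gaCr c (a : A) x : (a * gaC G c)@_x = a@_x * c.
Proof.
rewrite gamulE /gaC gamulgU.
have -> : \sum_(k' <- msupp a) << a@_k' * c *g (k' * 1)%g >>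
   = (c *: (a : {malg Cplx[G]})) by rewrite malgZ_def; apply: eq_bigr => y _; rewrite mulg1 mulrC.
by rewrite mcoeffZ mulrC.
Qed.

Lemma gaC_central c (a : A) : gaC G c * a = a * gaC G c.
Proof. by apply/malgP => x; rewrite mcoeff_gaCl mcoeff_gaCr mulrC. Qed.

Lemma gaC_zmod : zmod_morphism (gaC G).
Proof. by move=> x y; rewrite /gaC monalgUB. Qed.

Lemma gaC_monoid : monoid_morphism (gaC G).
Proof.
split; first by [].
by move=> x y; apply/malgP => z; rewrite mcoeff_gaCl /gaC !mcoeffU; case: eqP => _; rewrite ?mulr1n ?mulr0n ?mulr0.
Qed.

HB.instance Definition _ := GRing.isZmodMorphism.Build Cplx A (gaC G) gaC_zmod.
HB.instance Definition _ := GRing.isMonoidMorphism.Build Cplx A (gaC G) gaC_monoid.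

Lemma mcoeff_gelt (o : option G) x : (gelt o)@_x = (o == Some x)%:R.
Proof.
case: o => [h|] /=; last by rewrite mcoeff0.
by rewrite mcoeffU.
Qed.

Lemma mcoeff_sum (I : Type) (r : seq I) (P : pred I) (F : I -> A) x :
  (\sum_(i <- r | P i) F i)@_x = \sum_(i <- r | P i) (F i)@_x.
Proof. exact: raddf_sum. Qed.

End GA.
Section Cx.
Variables (n : nat) (cls : 'I_n -> nat).

Definition tt (x : 'I_n) := (cls x).+1./2.
Definition ii (x : 'I_n) := (tt x).*2.-1.
Definition sgn (x : 'I_n) : Cplx := if odd (cls x) then 1 else -1.
Definition sig (i : nat) (x : 'I_n) : Cplx := (cls x == i)%:R - (cls x == i.+1)%:R.
Definition mm (x : 'I_n) := Defs.msize cls (tt x).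
Definition Pc : 'M[Cplx]_n := \matrix_(v, w)
  if (cls v != 0%N) && (cls w != 0%N) && (tt v == tt w) then sgn v * sgn w / (mm v)%:R else 0.
Definition Qc : 'M[Cplx]_n := 1%:M - Pc.

Lemma ii_eq v x : cls v != 0%N ->
  (cls x == ii v) = ((cls x != 0%N) && (tt x == tt v) && odd (cls x)).
Proof. rewrite /ii /tt; lia. Qed.
Lemma ii1_eq v x : cls v != 0%N ->
  (cls x == (ii v).+1) = ((cls x != 0%N) && (tt x == tt v) && ~~ odd (cls x)).
Proof. rewrite /ii /tt; lia. Qed.

Lemma Pc_row v x : Pc v x = if cls v == 0%N then 0 else sgn v / (mm v)%:R * sig (ii v) x.
Proof.
rewrite /Pc mxE; have [cv|cv] := eqVneq (cls v) 0%N => //=.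
rewrite /sig (ii_eq x cv) (ii1_eq x cv) /sgn [tt x == tt v]eq_sym.
case: (cls x != 0%N); case: (tt v == tt x); rewrite /= ?subrr ?mulr0 //.
case: (odd (cls x)); rewrite /= ?subr0 ?sub0r ?mulr1 ?mulrN1 ?mulrN //.
all: by rewrite ?mulNr ?mulrAC.
Qed.

Lemma Pc_sym v w : Pc v w = Pc w v.
Proof.
rewrite /Pc !mxE [(cls w != 0%N) && _]andbC [tt w == tt v]eq_sym.
case h: (_ && _ && _) => //; move/andP: h => [_ /eqP e].
by rewrite [sgn v * _]mulrC /mm e.
Qed.

Lemma Pc_col x w : Pc x w = if cls w == 0%N then 0 else sgn w / (mm w)%:R * sig (ii w) x.
Proof. by rewrite Pc_sym Pc_row. Qed.

Lemma Qalpha_map (G : groupType) : Qalpha G cls = map_mx (gaC G) Qc.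
Proof.
apply/matrixP => v w; rewrite /Qalpha /Qc !mxE -/Pc.
have [cv|cv] := eqVneq (cls v) 0%N.
  by rewrite /= subr0 rmorph_nat.
have [cw|cw] := eqVneq (cls w) 0%N.
  by rewrite /= subr0 rmorph_nat.
rewrite /= -/(tt v) -/(tt w) -/(mm v).
have hs : sgn v * sgn v = 1 by rewrite /sgn; case: odd; rewrite ?mulr1 ?mulrNN ?mulr1.
case: (eqVneq (tt v) (tt w)) => htt /=; last first.
  have -> : (v == w) = false.
    by apply/negbTE; apply: contra_neq htt => ->.
  by rewrite subr0 rmorph0.
have [e|e] := eqVneq (cls v) (cls w).
  rewrite rmorphB rmorph_nat; congr (_ - gaC G _).
  by rewrite /sgn -e -/(sgn v) hs mul1r.
have -> : (v == w) = false by apply/negbTE; apply: contra_neq e => ->.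
have : odd (cls v) != odd (cls w).
  move: htt e cv cw; rewrite /tt; lia.
rewrite /= sub0r /sgn => hodd; congr (gaC G _).
by case: (odd (cls v)) hodd; case: (odd (cls w)) => //= _; rewrite ?mulN1r ?mul1r ?mulr1 ?mulrN1 ?opprK ?mulNr ?mul1r ?opprK.
Qed.

End Cx.
Section Gen.
Variables (n : nat) (cls : 'I_n -> nat).
Local Notation Pc := (Pc cls).
Local Notation sig := (sig cls).

Lemma coef_QBQ (G : groupType) (X Y : 'M[Cplx]_n) (B : 'M[grpalg G]_n) g v w :
  ((map_mx (gaC G) X *m B *m map_mx (gaC G) Y) v w)@_g
  = (X *m map_mx (mcoeff g) B *m Y) v w.
Proof.
rewrite !mxE mcoeff_sum; apply: eq_bigr => y _.
rewrite !mxE mcoeff_gaCr mcoeff_sum; congr (_ * _).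
by apply: eq_bigr => x _; rewrite !mxE mcoeff_gaCl.
Qed.

Lemma sig_sum j (f : 'I_n -> Cplx) :
  \sum_y f y * sig j y =
  \sum_(y | cls y == j) f y - \sum_(y | cls y == j.+1) f y.
Proof.
rewrite /sig; under eq_bigr do rewrite mulrBr !mulr_natr !mulrb.
by rewrite sumrB -!big_mkcond.
Qed.

Lemma sig_suml j (f : 'I_n -> Cplx) :
  \sum_y sig j y * f y =
  \sum_(y | cls y == j) f y - \sum_(y | cls y == j.+1) f y.
Proof. by rewrite -sig_sum; apply: eq_bigr => y _; rewrite mulrC. Qed.

Lemma sum_const_cls j (c : Cplx) : \sum_(y | cls y == j) c = c *+ csize cls j.
Proof.
rewrite /csize -sumr_const; apply: eq_bigl => y; by rewrite inE.
Qed.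

Lemma csize_gt0 j y : cls y = j -> (0 < csize cls j)%N.
Proof. by move=> e; apply/card_gt0P; exists y; rewrite inE e. Qed.

Lemma PA_entry (M : 'M[Cplx]_n) v w :
  (Pc *m M) v w = if cls v == 0%N then 0
     else sgn cls v / (mm cls v)%:R * \sum_x sig (ii cls v) x * M x w.
Proof.
rewrite mxE; under eq_bigr do rewrite Pc_row.
case: eqP => _; first by rewrite big1 // => x _; rewrite mul0r.
by rewrite mulr_sumr; apply: eq_bigr => x _; rewrite mulrA.
Qed.

Lemma AP_entry (M : 'M[Cplx]_n) v w :
  (M *m Pc) v w = if cls w == 0%N then 0
     else sgn cls w / (mm cls w)%:R * \sum_y M v y * sig (ii cls w) y.
Proof.
rewrite mxE; under eq_bigr do rewrite Pc_col.
case: eqP => _; first by rewrite big1 // => x _; rewrite mulr0.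
rewrite mulr_sumr; apply: eq_bigr => x _.
by rewrite mulrCA mulrA.
Qed.

Lemma expand_QAQ (M : 'M[Cplx]_n) :
  Qc cls *m M *m Qc cls = M - Pc *m M - (M *m Pc - (Pc *m M) *m Pc).
Proof.
by rewrite /Qc mulmxBl mul1mx mulmxBr mulmx1 mulmxBl.
Qed.

Lemma Qc_tr : (Qc cls)^T = Qc cls.
Proof.
apply/matrixP => v w; have := Pc_sym cls w v; rewrite /Qc /Pc !mxE => ->; by rewrite eq_sym.
Qed.

End Gen.
Lemma entryB (R : zmodType) m (A B : 'M[R]_m) v w : (A - B) v w = A v w - B v w.
Proof. by rewrite !mxE. Qed.

Section Main.
Variables (G : groupType) (n k : nat) (psi psia : 'I_n -> 'I_n -> option G)
  (cls : 'I_n -> nat).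
Hypotheses (Hgg : gain_graph psi) (Hcls : forall v, (cls v <= k.*2)%N)
  (HW : WQH k cls psi) (Ha : alpha_gains k cls psi psia).

Definition Am (g : G) : 'M[Cplx]_n := \matrix_(x, y) (psi x y == Some g)%:R.
Definition RS g x j := \sum_(y | cls y == j) Am g x y.
Definition Fr g J x := \sum_y Am g x y * sig cls J y.
Definition Mg g := Qc cls *m Am g *m Qc cls.

Lemma Psi_coef j x g : (Psi cls psi j x)@_g = RS g x j.
Proof.
rewrite /Psi mcoeff_sum /RS big_mkcond [RHS]big_mkcond; apply: eq_bigr => y _.
rewrite mxE; case: (cls y == j) => //=.
by case: (psi x y) => [h|]; rewrite /= ?mcoeffU ?mcoeff0.
Qed.

Lemma Am_adj g : map_mx (mcoeff g) (adjmx psi) = Am g.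
Proof. by apply/matrixP => x y; rewrite !mxE mcoeff_gelt. Qed.

Lemma Am_tr g : (Am g)^T = Am g^-1.
Proof.
apply/matrixP => x y; rewrite !mxE (Hgg.2 x y).
case: (psi x y) => [h|] //=.
have -> : (Some (h^-1)%g == Some g) = (Some h == Some (g^-1)%g) :> bool; last by [].
case: (eqVneq h (g^-1)%g) => [->|ne]; first by rewrite invgK !eqxx.
rewrite (negbTE (_ : Some h != Some (g^-1)%g)); last by apply: contra_neq ne => -[].
by apply: negbTE; apply: contra_neq ne => -[<-]; rewrite invgK.
Qed.

Lemma Mg_tr g : (Mg g)^T = Mg g^-1.
Proof. by rewrite /Mg !trmx_mul Qc_tr Am_tr mulmxA. Qed.

Lemma ii_facts v : cls v != 0%N ->
  [/\ odd (ii cls v), (0 < ii cls v)%N, (ii cls v < k.*2)%N &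
      (cls v == ii cls v) || (cls v == (ii cls v).+1)].
Proof. move=> cv; have := Hcls v; rewrite /ii /tt; split; lia. Qed.

Lemma Fr_RS g J x : Fr g J x = RS g x J - RS g x J.+1.
Proof. by rewrite /Fr sig_sum. Qed.

Lemma K1 g v w x : cls v != 0%N -> cls w != 0%N ->
  (cls x == ii cls v) || (cls x == (ii cls v).+1) ->
  Fr g (ii cls w) x = sgn cls x * sgn cls v * Fr g (ii cls w) v.
Proof.
move=> cv cw hx.
have [oI I0 Ik hv] := ii_facts cv; have [oJ J0 Jk _] := ii_facts cw.
move: hx hv oI I0 Ik oJ J0 Jk; set I := ii cls v; set J := ii cls w => hx hv oI I0 Ik oJ J0 Jk.
case: HW => [W1 [W2 [W3 W4]]].
rewrite !Fr_RS.
have sI : forall y, cls y = I -> sgn cls y = 1 by move=> y e; rewrite /sgn e oI.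
have sI1 : forall y, cls y = I.+1 -> sgn cls y = -1 by move=> y e; rewrite /sgn e /= oI.
have c2 : forall a b j, cls a = cls b -> cls a = I \/ cls a = I.+1 -> j = J \/ j = J.+1 ->
    RS g a j = RS g b j.
  move=> a b j eab ha hj; rewrite -!Psi_coef; congr (mcoeff g _).
  by apply: (W2 (cls a) j a b) => //; lia.
case/orP: hx => /eqP ex; case/orP: hv => /eqP ev.
- rewrite (sI x ex) (sI v ev) !mul1r; congr (_ - _); apply: c2; lia.
- have [e1 e2] := W3 I J x v oI Ik oJ Jk ex ev.
  rewrite (sI x ex) (sI1 v ev) -!Psi_coef e1 e2; ring.
- have [e1 e2] := W3 I J v x oI Ik oJ Jk ev ex.
  rewrite (sI1 x ex) (sI v ev) -!Psi_coef e1 e2; ring.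
- rewrite (sI1 x ex) (sI1 v ev) mulrNN !mul1r; congr (_ - _); apply: c2; lia.
Qed.

Lemma GenK g v w : cls v != 0%N -> cls w != 0%N ->
  \sum_x sig cls (ii cls v) x * Fr g (ii cls w) x
  = sgn cls v * Fr g (ii cls w) v * ((mm cls v)%:R *+ 2).
Proof.
move=> cv cw.
have [oI I0 Ik hv] := ii_facts cv.
case: HW => [W1 _].
rewrite sig_suml.
rewrite (eq_bigr (fun _ => sgn cls v * Fr g (ii cls w) v)); last first.
  move=> x ex; rewrite (K1 g cv cw); last by rewrite ex.
  by rewrite [sgn cls x]/sgn (eqP ex) oI mul1r.
rewrite [X in _ - X](eq_bigr (fun _ => - (sgn cls v * Fr g (ii cls w) v))); last first.
  move=> x ex; rewrite (K1 g cv cw); last by rewrite ex orbT.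
  by rewrite [sgn cls x]/sgn (eqP ex) /= oI /= mulN1r mulNr.
rewrite !sum_const_cls -(W1 _ oI Ik) -/(mm cls v).
by rewrite mulNrn opprK mulr2n mulrDr !mulr_natr.
Qed.

Lemma F3 j v o : Psi cls psi j v = gelt o *+ csize cls j ->
  forall y, cls y = j -> psi v y = o.
Proof.
move=> E y cy.
have E' : forall h, RS h v j = (o == Some h)%:R *+ csize cls j.
  by move=> h; rewrite -Psi_coef E mcoeffMn mcoeff_gelt.
case: o E' {E} => [h|] E'.
- have := E' h; rewrite eqxx /= mulr1n -sum_const_cls => /eqP.
  rewrite eq_sym -subr_eq0 /RS -sumrB => /eqP S.
  have nn : forall x, cls x == j -> 0 <= 1 - Am h v x.
    move=> x _; rewrite mxE subr_ge0; case: (_ == _); by rewrite ?lexx ?ler01.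
  have := psumr_eq0P nn S; move=> /(_ y); rewrite cy eqxx => /(_ isT).
  rewrite mxE; case: eqP => [->//|_]; rewrite subr0 => /eqP; by rewrite oner_eq0.
- case E2: (psi v y) => [h|] //.
  have := E' h; rewrite /= mul0rn /RS => S.
  have nn : forall x, cls x == j -> 0 <= Am h v x by move=> x _; rewrite mxE ler0n.
  have := psumr_eq0P nn S; move=> /(_ y); rewrite cy eqxx => /(_ isT).
  by rewrite mxE E2 eqxx => /eqP; rewrite oner_eq0.
Qed.

Lemma mm_gt0 w : cls w != 0%N -> (mm cls w)%:R != 0 :> Cplx.
Proof.
move=> cw; have [oJ J0 Jk hw] := ii_facts cw.
case: HW => [W1 _].
rewrite pnatr_eq0 -lt0n /mm /Defs.msize -/(tt cls w) -/(ii cls w).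
case/orP: hw => /eqP ew; first exact: csize_gt0 ew.
by rewrite (W1 _ oJ Jk); apply: csize_gt0 ew.
Qed.

Lemma alg1 (x1 x2 : Cplx) m : (m%:R : Cplx) != 0 ->
  x2 = x1 - 1 / m%:R * (x1 *+ m - x2 *+ m).
Proof. by move=> h; rewrite -(mulr_natr x1) -(mulr_natr x2); field. Qed.
Lemma alg2 (x1 x2 : Cplx) m : (m%:R : Cplx) != 0 ->
  x1 = x2 - (-1) / m%:R * (x1 *+ m - x2 *+ m).
Proof. by move=> h; rewrite -(mulr_natr x1) -(mulr_natr x2); field. Qed.

Lemma main0 g v w : cls v = 0%N -> (psia v w == Some g)%:R = Mg g v w.
Proof.
move=> cv.
case: HW => [W1 [W2 [W3 W4]]]; case: Ha => [A1 [A2 [A3 [A4 A5]]]].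
rewrite /Mg expand_QAQ -mulmxA !entryB !PA_entry cv /= !subr0.
rewrite AP_entry.
have [cw|cw] := eqVneq (cls w) 0%N.
  by rewrite /= subr0 (A3 v w cv cw) mxE.
have mpos := mm_gt0 cw.
have [oJ J0 Jk hw] := ii_facts cw.
have mmE : mm cls w = csize cls (ii cls w) by [].
rewrite mmE in mpos *.
move: oJ J0 Jk hw mpos; set J := ii cls w => oJ J0 Jk hw mpos.
rewrite -/(Fr g J v) Fr_RS.
case: (W4 v J cv oJ Jk) => [Ea | [g1 [g2 [ne [E1 E2]]]]].
  have := congr1 (mcoeff g) Ea; rewrite !Psi_coef => ->.
  rewrite subrr mulr0 subr0 (A4 v J w cv oJ Jk Ea) ?mxE //.
  by case/orP: hw => /eqP; [left|right].
have [B1 B2] := A5 v J g1 g2 cv oJ Jk ne E1 E2.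
have R1 := congr1 (mcoeff g) E1; have R2 := congr1 (mcoeff g) E2.
rewrite Psi_coef mcoeffMn mcoeff_gelt in R1.
rewrite Psi_coef mcoeffMn mcoeff_gelt -(W1 J oJ Jk) in R2.
rewrite R1 R2.
case/orP: hw => /eqP ew.
  rewrite (B1 w ew) mxE (F3 E1 ew) /sgn ew oJ; exact: (alg1 _ _ mpos).
rewrite (B2 w ew) mxE (F3 E2 ew) /sgn ew /= oJ /=; exact: (alg2 _ _ mpos).
Qed.

Lemma Am_trE g x y : Am (g^-1)%g y x = Am g x y.
Proof. by rewrite -Am_tr mxE. Qed.

Lemma alg3 (A a b T sv sw m m' : Cplx) : (sv = 1 \/ sv = -1) -> (sw = 1 \/ sw = -1) ->
  m != 0 -> m' != 0 ->
  T = sv * a * (m *+ 2) -> T = sw * b * (m' *+ 2) ->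
  A = A - sv / m * b - (sw / m' * a - sv / m * (sw / m' * T)).
Proof.
move=> hv hw hm hm' eT1 eT2.
have two : (2%:R : Cplx) != 0 by rewrite pnatr_eq0.
have eb : b = sw * T / (m' *+ 2).
  rewrite eT2 -mulr_natr; case: hw => ->; field; by rewrite ?hm' ?two.
rewrite eb eT1 -!(mulr_natr m) -!(mulr_natr m'); case: hv => ->; case: hw => ->; field; by rewrite ?hm ?hm' ?two.
Qed.

Lemma PAP_entry g v w : cls v != 0%N -> cls w != 0%N ->
  ((Pc cls *m Am g) *m Pc cls) v w = sgn cls v / (mm cls v)%:R *
    (sgn cls w / (mm cls w)%:R * \sum_x sig cls (ii cls v) x * Fr g (ii cls w) x).
Proof.
move=> cv cw; rewrite -mulmxA PA_entry (negbTE cv); congr (_ * _).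
under eq_bigr do rewrite AP_entry (negbTE cw) mulrCA.
by rewrite -mulr_sumr.
Qed.

Lemma main_nz g v w : cls v != 0%N -> cls w != 0%N ->
  (psia v w == Some g)%:R = Mg g v w.
Proof.
move=> cv cw.
case: Ha => [A1 [A2 _]].
rewrite /Mg expand_QAQ !entryB PAP_entry // PA_entry (negbTE cv) AP_entry (negbTE cw).
rewrite (A2 v w cv cw) mxE.
have HE : forall y, \sum_x sig cls (ii cls v) x * Am g x y = Fr (g^-1)%g (ii cls v) y.
  by move=> y; rewrite /Fr; apply: eq_bigr => x _; rewrite Am_trE mulrC.
rewrite HE -/(Fr g (ii cls w) v).
have eT1 := GenK g cv cw.
have eT2 : \sum_x sig cls (ii cls v) x * Fr g (ii cls w) x
   = sgn cls w * Fr (g^-1)%g (ii cls v) w * ((mm cls w)%:R *+ 2).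
  rewrite -(GenK (g^-1)%g cw cv).
  under eq_bigr do rewrite /Fr mulr_sumr.
  rewrite exchange_big /=; apply: eq_bigr => y _.
  rewrite -HE mulr_sumr; apply: eq_bigr => x _; ring.
apply: alg3 eT1 eT2; rewrite ?mm_gt0 //; rewrite /sgn; case: odd; by [left|right].
Qed.

Lemma omap_inv_eq (o : option G) g :
  (omap (fun h => (h^-1)%g) o == Some (g^-1)%g) = (o == Some g).
Proof.
case: o => [h|] //=.
case: (eqVneq h g) => [->|ne]; first by rewrite !eqxx.
rewrite (negbTE (_ : Some h != Some g)); last by apply: contra_neq ne => -[].
by apply: negbTE; apply: contra_neq ne => -[e]; apply: invg_inj.
Qed.

Lemma main_all g v w : (psia v w == Some g)%:R = Mg g v w.
Proof.
have [cv|cv] := eqVneq (cls v) 0%N; first exact: main0.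
have [cw|cw] := eqVneq (cls w) 0%N; last exact: main_nz.
case: Ha => [A1 _].
by rewrite -omap_inv_eq -A1 (@main0 (g^-1)%g w v cw) -Mg_tr mxE.
Qed.

Lemma adj_eq : adjmx psia = Qalpha G cls *m adjmx psi *m Qalpha G cls.
Proof.
rewrite Qalpha_map; apply/matrixP => v w; apply/malgP => g.
by rewrite coef_QBQ Am_adj -/(Mg g) -main_all /adjmx mxE mcoeff_gelt.
Qed.

Lemma entryD (R : zmodType) m (A B : 'M[R]_m) v w : (A + B) v w = A v w + B v w.
Proof. by rewrite !mxE. Qed.

Lemma sig_prod I J x : odd I -> odd J ->
  sig cls I x * sig cls J x =
  if I == J then (cls x == I)%:R + (cls x == I.+1)%:R else 0.
Proof.
move=> oI oJ; rewrite /sig.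
case: (eqVneq (cls x) I) => e1; case: (eqVneq (cls x) I.+1) => e2;
case: (eqVneq (cls x) J) => e3; case: (eqVneq (cls x) J.+1) => e4;
case: (eqVneq I J) => e5 /=; rewrite ?subr0 ?sub0r ?mulr1 ?mul1r ?mulr0 ?mul0r ?addr0 ?add0r ?mulrNN ?subrr //; try lia.
all: by rewrite ?mulr1.
Qed.

Lemma sum_ind j : \sum_x ((cls x == j)%:R : Cplx) = (csize cls j)%:R.
Proof.
rewrite -sum_const_cls [RHS]big_mkcond; apply: eq_bigr => x _.
by case: (cls x == j).
Qed.

Lemma PcPc : Pc cls *m Pc cls = Pc cls + Pc cls.
Proof.
apply/matrixP => v w; rewrite entryD PA_entry !(Pc_row cls v w).
have [cv|cv] := eqVneq (cls v) 0%N; first by rewrite addr0.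
under eq_bigr do rewrite Pc_col.
have [cw|cw] := eqVneq (cls w) 0%N.
  rewrite big1 ?mulr0; last by move=> x _; rewrite mulr0.
  have [oI I0 Ik hv] := ii_facts cv.
  by rewrite /sig cw; case: (eqVneq 0%N (ii cls v)) => e1; case: (eqVneq 0%N (ii cls v).+1) => e2;
    rewrite /= ?subrr ?mulr0 ?addr0 //; lia.
under eq_bigr do rewrite mulrCA.
rewrite -mulr_sumr.
have [oI I0 Ik hv] := ii_facts cv; have [oJ J0 Jk hw] := ii_facts cw.
under eq_bigr do rewrite sig_prod //.
case: HW => [W1 _].
have m1 := mm_gt0 cv.
case: (eqVneq (ii cls v) (ii cls w)) => eIJ.
  rewrite big_split /= !sum_ind -(W1 _ oI Ik).
  have emm : mm cls w = mm cls v by rewrite /mm /Defs.msize -/(tt cls w) -/(ii cls w) -eIJ.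
  have esig : sig cls (ii cls v) w = sgn cls w.
    rewrite eIJ /sig /sgn; case/orP: hw => /eqP ->; rewrite /= ?oJ /= ?eqxx.
      by rewrite (_ : (ii cls w == (ii cls w).+1) = false) ?subr0 //; lia.
    by rewrite (_ : ((ii cls w).+1 == ii cls w) = false) ?sub0r //; lia.
  rewrite emm esig -/(mm cls v).
  move: m1; set m := (mm cls v)%:R => m1.
  field; exact: m1.
rewrite big1 ?mulr0 ?mul0r ?addr0; last by [].
have -> : sig cls (ii cls v) w = 0.
  have h1 : (ii cls w == ii cls v) = false by lia.
  have h2 : (ii cls w == (ii cls v).+1) = false by lia.
  have h3 : ((ii cls w).+1 == ii cls v) = false by lia.
  have h4 : ((ii cls w).+1 == (ii cls v).+1) = false by lia.
  by rewrite /sig; case/orP: hw => /eqP ->; rewrite ?h1 ?h2 ?h3 ?h4 subrr.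
by rewrite mulr0 addr0.
Qed.

Lemma QcQc : Qc cls *m Qc cls = 1%:M.
Proof.
by rewrite /Qc mulmxBl mul1mx mulmxBr mulmx1 PcPc opprB addrK subrK.
Qed.

End Main.
Lemma tr_swap (G : groupType) m (X B : 'M[grpalg G]_m) :
  (forall i j (a : grpalg G), X i j * a = a * X i j) -> \tr (X *m B) = \tr (B *m X).
Proof.
move=> hX; rewrite /mxtrace.
under eq_bigr do rewrite mxE.
under [RHS]eq_bigr do rewrite mxE.
rewrite exchange_big; apply: eq_bigr => i _; apply: eq_bigr => j _; exact: hX.
Qed.

Lemma pow_conj (G : groupType) m (Q A : 'M[grpalg G]_m) h :
  Q *m Q = 1%:M -> (Q *m A *m Q) ^+ h = Q *m A ^+ h *m Q.
Proof.
move=> QQ; elim: h => [|h IH]; first by rewrite !expr0 mulmx1 QQ.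
rewrite exprSr IH exprSr !mulmxE in QQ *.
by rewrite !mulrA -(mulrA _ Q Q) QQ mulr1.
Qed.

Theorem mainTheorem2 (G : groupType) (n k : nat)
    (psi psia : 'I_n -> 'I_n -> option G) (cls : 'I_n -> nat) :
  gain_graph psi ->
  (forall v, (cls v <= k.*2)%N) ->
  (forall v w : 'I_n, (v <= w)%N -> (cls v <= cls w)%N) ->
  WQH k cls psi ->
  alpha_gains k cls psi psia ->
  adjmx psia = Qalpha G cls *m adjmx psi *m Qalpha G cls /\
  G_cospectral (adjmx psi) (adjmx psia).
Proof.
move=> Hgg Hcls _ HW Ha.
have E := adj_eq Hgg Hcls HW Ha.
split; first exact: E.
have QQ : map_mx (gaC G) (Qc cls) *m map_mx (gaC G) (Qc cls) = 1%:M.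
  by rewrite -map_mxM (QcQc Hcls HW) map_mx1.
move=> h _; rewrite E Qalpha_map pow_conj //.
rewrite -mulmxA tr_swap; last by move=> i j a; rewrite mxE gaC_central.
by rewrite -mulmxA QQ mulmx1.
Qed.
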